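(* Let $R$ be a commutative Noetherian ring, $M$ a finitely generated $R$-module, $\mathscr{E}$ an $R$-submodule of $\mathrm{Hom}_R(M,R)$, and $S \subseteq M$ a subset. Suppose $F \subseteq \langle S\rangle$ is a free $\mathscr{E}$-summand of $M$ of rank $i$, with split surjection $\varphi: M \to F \cong R^i$ (restricting to the identity on $F$) whose coordinates lie in $\mathscr{E}$. Let $M' = \ker(\varphi)$, so $M = F \oplus M'$, let $S'$ be the projection of $S$ to $M'$ along this direct sum, and let $\mathscr{E}' = \{f|_{M'} : f \in \mathscr{E}\} \subseteq \mathrm{Hom}_R(M',R)$ be the projection of $\mathscr{E}$ to $\mathrm{Hom}_R(M',R)$. Then for all $\mathfrak{p} \in \mathrm{Spec}(R)$, $\delta^{\mathscr{E}'}_\mathfrak{p}(S',M') = \delta^{\mathscr{E}}_\mathfrak{p}(S,M) - i$.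
   Context: $\langle S\rangle$ is the submodule generated by $S$. For an $R$-submodule $\mathscr{E}$ of $\mathrm{Hom}_R(M,R)$ and a prime $\mathfrak{p}$, $\mathscr{E}_\mathfrak{p}$ is viewed inside $\mathrm{Hom}_{R_\mathfrak{p}}(M_\mathfrak{p},R_\mathfrak{p})$. A free $\mathscr{E}_\mathfrak{p}$-summand of $M_\mathfrak{p}$ is a direct summand $F$ (with complement $G$) of $M_\mathfrak{p}$, $F \cong R_\mathfrak{p}^n$, such that each coordinate of the projection $M_\mathfrak{p} \to F \cong R_\mathfrak{p}^n$ along $G$ lies in $\mathscr{E}_\mathfrak{p}$; free $\mathscr{E}$-summands of $M$ are defined the same way over $R$. $\delta^{\mathscr{E}}_\mathfrak{p}(S,M)$ is the largest integer $n \ge 0$ such that there is a free $\mathscr{E}_\mathfrak{p}$-summand of $M_\mathfrak{p}$ of rank $n$ contained in $\langle S\rangle_\mathfrak{p}$. *)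

(* Defs.v *)
From HB Require Import structures.
From mathcomp Require Import all_boot all_order all_algebra.
Set Implicit Arguments. Unset Strict Implicit. Unset Printing Implicit Defensive.
Import GRing.Theory.
Local Open Scope ring_scope.

(* Conventions: subsets are Prop-valued predicates; the localization at a
   prime p is modelled by fractions (numerator, denominator) with the usual
   equivalence relation (setoid-style, no quotient type). *)

Section RingDefs.
Variable R : comPzRingType.

Definition is_ideal (I : R -> Prop) :=
  I 0 /\ (forall x y, I x -> I y -> I (x + y)) /\ (forall a x, I x -> I (a * x)).

Definition prime_ideal (p : R -> Prop) :=
  is_ideal p /\ ~ p 1 /\ (forall a b, p (a * b) -> p a \/ p b).

Definition noetherian :=
  forall I : R -> Prop, is_ideal I ->
    exists n (g : 'I_n -> R),
      forall x, I x <-> exists c : 'I_n -> R, x = \sum_(k < n) c k * g k.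
End RingDefs.

Section ModDefs.
Variables (R : comPzRingType) (M : lmodType R).

Definition gen_span (S : M -> Prop) (m : M) :=
  exists n (v : 'I_n -> M) (c : 'I_n -> R),
    (forall k, S (v k)) /\ m = \sum_(k < n) c k *: v k.

Definition fin_gen :=
  exists n (g : 'I_n -> M), forall m, exists c : 'I_n -> R, m = \sum_(k < n) c k *: g k.

Definition lin_fun (f : M -> R) := forall a x y, f (a *: x + y) = a * f x + f y.

Definition hom_submod (E : (M -> R) -> Prop) :=
  (forall f, E f -> lin_fun f) /\ E (fun _ => 0) /\
  (forall f g, E f -> E g -> E (fun x => f x + g x)) /\
  (forall a f, E f -> E (fun x => a * f x)).

Variable p : R -> Prop.

(* x = x.1 / x.2 is an element of N_p *)
Definition lfrac (N : M -> Prop) (x : M * R) := N x.1 /\ ~ p x.2.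
Definition feq (x y : M * R) :=
  exists u, ~ p u /\ u *: (y.2 *: x.1 - x.2 *: y.1) = 0.
Definition req (a b : R * R) :=
  exists u, ~ p u /\ u * (b.2 * a.1 - a.2 * b.1) = 0.
Definition fadd (x y : M * R) : M * R := (y.2 *: x.1 + x.2 *: y.1, x.2 * y.2).
Definition fscale (a : R * R) (x : M * R) : M * R := (a.1 *: x.1, a.2 * x.2).
Definition fzero : M * R := (0, 1).
Definition lcomb n (c : 'I_n -> R * R) (b : 'I_n -> M * R) : M * R :=
  \big[fadd/fzero]_(k < n) fscale (c k) (b k).

Definition lsubmod (N : M -> Prop) (F : M * R -> Prop) :=
  (forall x, F x -> lfrac N x) /\
  (forall x y, F x -> lfrac N y -> feq x y -> F y) /\
  F fzero /\ (forall x y, F x -> F y -> F (fadd x y)) /\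
  (forall a x, ~ p a.2 -> F x -> F (fscale a x)).

(* F is a free E_p-summand of N_p of rank n: N_p = F (+) G, F has an R_p-basis
   b (giving F ~= R_p^n), and the coordinates of the projection N_p -> F along G
   are elements e/u of E_p (e in E, u not in p). *)
Definition free_E_summand (N : M -> Prop) (E : (M -> R) -> Prop)
    (F : M * R -> Prop) (n : nat) :=
  exists (G : M * R -> Prop) (b : 'I_n -> M * R),
    [/\ lsubmod N F, lsubmod N G,
        (forall x, lfrac N x -> exists f g, [/\ F f, G g & feq x (fadd f g)]),
        (forall x, F x -> G x -> feq x fzero) &
        [/\ (forall k, F (b k)),
            (forall x, F x -> exists c : 'I_n -> R * R,
                 (forall k, ~ p (c k).2) /\ feq x (lcomb c b)),
            (forall c : 'I_n -> R * R, (forall k, ~ p (c k).2) ->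
                 feq (lcomb c b) fzero -> forall k, req (c k) (0, 1)) &
            exists (e : 'I_n -> M -> R) (u : 'I_n -> R),
              (forall k, E (e k) /\ ~ p (u k)) /\
              forall x, lfrac N x -> exists g, G g /\
                feq x (fadd (lcomb (fun k => (e k x.1, u k * x.2)) b) g)]].

Definition lspan (N : M -> Prop) (S : M -> Prop) (x : M * R) :=
  lfrac N x /\ exists m t, [/\ gen_span S m, ~ p t & feq x (m, t)].

Definition has_summand N E S n :=
  exists F, free_E_summand N E F n /\ forall x, F x -> lspan N S x.

Definition delta_is N E S (d : nat) :=
  has_summand N E S d /\ forall n, has_summand N E S n -> (n <= d)%N.
End ModDefs.

(* Main.v *)
Require Import Defs.
From HB Require Import structures.
From mathcomp Require Import all_boot all_order all_algebra.
From Stdlib Require Import Classical ClassicalEpsilon.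
From mathcomp Require Import ring.
Set Implicit Arguments. Unset Strict Implicit. Unset Printing Implicit Defensive.
Import GRing.Theory.
Local Open Scope ring_scope.
Section Mat.
Variables (R : comPzRingType) (p : R -> Prop).
Hypothesis pid : is_ideal p.

Lemma p0 : p 0. Proof. by case: pid. Qed.
Lemma pD a b : p a -> p b -> p (a + b). Proof. by case: pid => _ [H _]; apply: H. Qed.
Lemma pM a b : p b -> p (a * b). Proof. by case: pid => _ [_ H]; apply: H. Qed.
Lemma pMr a b : p a -> p (a * b). Proof. by rewrite mulrC; apply: pM. Qed.
Lemma psum n (f : 'I_n -> R) : (forall i, p (f i)) -> p (\sum_i f i).
Proof. move=> H; apply: big_ind => //; [exact: p0 | exact: pD]. Qed.

Lemma cofactorE m (N : 'M[R]_m.+1) i j :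
  cofactor N i j = (-1) ^+ (i + j) * \det (\matrix_(a, b) N (lift i a) (lift j b)).
Proof. by rewrite /cofactor; congr (_ * \det _); apply/matrixP => a b; rewrite !mxE. Qed.

Definition minor m n (r : 'I_m -> 'I_n) (c : 'I_m -> 'I_n) (C : 'M[R]_n) :=
  \matrix_(a, b) C (r a) (c b).

Lemma pcof k (C : 'M[R]_k.+1) i j :
  (forall r c : 'I_k -> 'I_k.+1, p (\det (minor r c C))) -> p (cofactor C i j).
Proof. by move=> H; rewrite cofactorE; apply: pM; apply: H. Qed.

Lemma pdet k (C : 'M[R]_k.+1) :
  (forall r c : 'I_k -> 'I_k.+1, p (\det (minor r c C))) -> p (\det C).
Proof.
by move=> H; rewrite (expand_det_row _ 0); apply: psum => j; apply: pM; apply: pcof.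
Qed.

Lemma L0 k (C : 'M[R]_k.+1) (x y : 'I_k.+1 -> R) :
  (forall r c : 'I_k -> 'I_k.+1, p (\det (minor r c C))) ->
  p (\det (\matrix_(a, b) (C a b + x a * y b))).
Proof.
move=> H.
pose X : 'cV[R]_k.+1 := \col_a x a.
pose Y : 'rV[R]_k.+1 := \row_b y b.
pose B : 'M[R]_(1 + k.+1) := block_mx 1%:M Y (- X) C.
have eB : B = block_mx 1%:M 0 (- X) 1%:M *m block_mx 1%:M Y 0 (C + X *m Y).
  rewrite mulmx_block !mul1mx !mul0mx ?mulmx0 !mulmx1 ?addr0 ?add0r mulNmx.
  by rewrite /B addrCA addNr addr0.
have dB : \det B = \det (\matrix_(a, b) (C a b + x a * y b)).
  rewrite eB det_mulmx det_lblock det_ublock !det1 !mul1r; congr (\det _).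
  apply/matrixP => a b; rewrite !mxE big_ord1 !mxE; done.
have BE a b : B (rshift 1 a) (rshift 1 b) = C a b by rewrite /B block_mxEdr.
clearbody B.
rewrite -dB (expand_det_row _ (lshift _ 0)) big_split_ord /= big_ord1.
apply: pD.
  apply: pM; rewrite cofactorE; apply: pM; apply: pdet => r c.
  set N := minor r c _.
  have -> : N = minor r c C.
    apply/matrixP => a b; rewrite !mxE.
    have -> : lift (lshift k.+1 (0 : 'I_1)) (r a) = rshift 1 (r a) by apply: val_inj.
    have -> : lift (lshift k.+1 (0 : 'I_1)) (c b) = rshift 1 (c b) by apply: val_inj.
    by rewrite BE.
  exact: H.
apply: psum => j; apply: pM.
rewrite cofactorE; apply: pM.
rewrite (expand_det_col _ 0); apply: psum => i; apply: pM.
rewrite cofactorE; apply: pM.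
set N := \matrix_(a, b) _.
have -> : N = minor (lift i) (lift j) C.
  apply/matrixP => a b; rewrite !mxE.
  have -> : lift (lshift k.+1 (0 : 'I_1)) (lift i a) = rshift 1 (lift i a).
    by apply: val_inj.
  have -> : lift (rshift 1 j) (lift 0 b) = rshift 1 (lift j b).
    apply: val_inj => /=; rewrite /bump /=.
    by rewrite leq_add2l addnCA.
  by rewrite BE.
exact: H.
Qed.
End Mat.
Section Mat2.
Variables (R : comPzRingType) (p : R -> Prop).
Hypothesis pid : is_ideal p.

Definition Qm n (B : 'M[R]_n) m := exists r c : 'I_m -> 'I_n, ~ p (\det (minor r c B)).

Lemma Qstep n (B : 'M[R]_n) (x y : 'I_n -> R) k :
  Qm (\matrix_(a, b) (B a b + x a * y b)) k.+1 -> Qm B k.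
Proof.
move=> [r [c H]]; apply: NNPP => nQ; apply: H.
have -> : minor r c (\matrix_(a, b) (B a b + x a * y b)) =
          \matrix_(a, b) (minor r c B a b + x (r a) * y (c b)).
  by apply/matrixP => a b; rewrite !mxE.
apply: L0 => // r' c'.
have -> : minor r' c' (minor r c B) = minor (r \o r') (c \o c') B.
  by apply/matrixP => a b; rewrite !mxE.
by apply: NNPP => h; apply: nQ; exists (r \o r'), (c \o c').
Qed.

Lemma QstepN j n (B : 'M[R]_n) (x y : 'I_j -> 'I_n -> R) k :
  Qm (\matrix_(a, b) (B a b + \sum_(l < j) x l a * y l b)) (k + j) -> Qm B k.
Proof.
elim: j B x y k => [|j IH] B x y k.
  have -> : \matrix_(a, b) (B a b + \sum_(l < 0) x l a * y l b) = B.
    by apply/matrixP => a b; rewrite !mxE big_ord0 addr0.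
  by rewrite addn0.
move=> H.
pose B1 := \matrix_(a, b) (B a b + x ord0 a * y ord0 b).
apply: (@Qstep n B (x ord0) (y ord0)); rewrite -/B1.
apply: (IH B1 (fun l => x (lift ord0 l)) (fun l => y (lift ord0 l))).
rewrite addSn -addnS.
have <- : \matrix_(a, b) (B a b + \sum_(l < j.+1) x l a * y l b) =
  \matrix_(a, b) (B1 a b + \sum_(l < j) x (lift ord0 l) a * y (lift ord0 l) b).
  by apply/matrixP => a b; rewrite !mxE big_ord_recl addrA.
exact: H.
Qed.

Lemma Qzero n k : ~ Qm (0 : 'M[R]_n) k.+1.
Proof.
move=> [r [c H]]; apply: H.
have -> : minor r c (0 : 'M[R]_n) = 0 by apply/matrixP => a b; rewrite !mxE.
by rewrite det0; apply: p0.
Qed.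

Lemma Qfull n (B : 'M[R]_n) : ~ p (\det B) -> Qm B n.
Proof.
move=> H; exists id, id.
by have -> : minor id id B = B by apply/matrixP => a b; rewrite !mxE.
Qed.
End Mat2.
Section Frac.
Variables (R : comPzRingType) (M : lmodType R).

Lemma lcombS n (c : 'I_n.+1 -> R * R) (b : 'I_n.+1 -> M * R) :
  lcomb c b = fadd (fscale (c ord0) (b ord0))
                   (lcomb (fun k => c (lift ord0 k)) (fun k => b (lift ord0 k))).
Proof. exact: big_ord_recl. Qed.

Lemma lcomb0 (c : 'I_0 -> R * R) (b : 'I_0 -> M * R) : lcomb c b = fzero M.
Proof. exact: big_ord0. Qed.

Lemma lcomb2 n (c : 'I_n -> R * R) (b : 'I_n -> M * R) :
  (lcomb c b).2 = \prod_k ((c k).2 * (b k).2).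
Proof.
elim: n c b => [|n IH] c b; first by rewrite lcomb0 big_ord0.
by rewrite lcombS /= IH [in RHS]big_ord_recl.
Qed.

Lemma prod_neq_0 n (q : 'I_n.+1 -> R) :
  \prod_(j < n.+1 | j != ord0) q j = \prod_(j < n) q (lift ord0 j).
Proof. by rewrite big_mkcond big_ord_recl /= mul1r. Qed.

Lemma prod_neq_lift n (q : 'I_n.+1 -> R) (k : 'I_n) :
  \prod_(j < n.+1 | j != lift ord0 k) q j =
  q ord0 * \prod_(j < n | j != k) q (lift ord0 j).
Proof.
rewrite big_mkcond big_ord_recl /= [in RHS]big_mkcond /=.
by congr (_ * _); apply: eq_bigr => j _; rewrite ?(inj_eq (@lift_inj _ ord0)).
Qed.

Lemma lcomb1 n (c : 'I_n -> R * R) (b : 'I_n -> M * R) :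
  (lcomb c b).1 =
  \sum_k ((\prod_(j | j != k) ((c j).2 * (b j).2)) * (c k).1) *: (b k).1.
Proof.
elim: n c b => [|n IH] c b; first by rewrite lcomb0 big_ord0.
rewrite lcombS /= IH lcomb2 [in RHS]big_ord_recl /= prod_neq_0.
rewrite scaler_sumr; congr (_ + _).
  by rewrite scalerA mulrC.
apply: eq_bigr => k _; rewrite scalerA prod_neq_lift; congr (_ *: _).
by rewrite mulrA.
Qed.
End Frac.
Section Basics.
Variables (R : comPzRingType) (M : lmodType R) (p : R -> Prop).
Hypothesis pp : prime_ideal p.

Lemma pid_of : is_ideal p. Proof. by case: pp. Qed.
Lemma np1 : ~ p 1. Proof. by case: pp => _ []. Qed.
Lemma npM a b : ~ p a -> ~ p b -> ~ p (a * b).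
Proof. by case: pp => _ [_ H] ha hb /H []. Qed.
Lemma npprod n (f : 'I_n -> R) : (forall k, ~ p (f k)) -> ~ p (\prod_k f k).
Proof. move=> H; apply: (big_ind (fun x => ~ p x)) => //; [exact: np1 | exact: npM]. Qed.
Lemma npX a n : ~ p a -> ~ p (a ^+ n).
Proof. by move=> H; elim: n => [|n IH]; rewrite ?expr0 ?exprS; [exact: np1 | exact: npM]. Qed.
Lemma npprodc n (f : 'I_n -> R) (P : pred 'I_n) : (forall k, ~ p (f k)) -> ~ p (\prod_(k | P k) f k).
Proof. move=> H; apply: (big_ind (fun x => ~ p x)) => //; [exact: np1 | exact: npM]. Qed.

Variable S : M -> Prop.

Lemma span0 : gen_span S 0.
Proof. by exists 0%N, (fun _ => 0), (fun _ => 0); split => [[]//|]; rewrite big_ord0. Qed.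

Lemma span_in v : S v -> gen_span S v.
Proof.
move=> Sv; exists 1%N, (fun _ => v), (fun _ => 1); split => //.
by rewrite big_ord1 scale1r.
Qed.

Lemma spanZD a m m' : gen_span S m -> gen_span S m' -> gen_span S (a *: m + m').
Proof.
move=> [n1 [v1 [c1 [H1 ->]]]] [n2 [v2 [c2 [H2 ->]]]].
exists (n1 + n2)%N, (fun k => match split k with inl a => v1 a | inr b => v2 b end),
  (fun k => match split k with inl x => a * c1 x | inr b => c2 b end).
split => [k|]; first by case: (split k).
rewrite big_split_ord /= scaler_sumr; congr (_ + _); apply: eq_bigr => k _.
  by rewrite (unsplitK (inl _ k)) scalerA.
by rewrite (unsplitK (inr _ k)).
Qed.

Lemma spanD m m' : gen_span S m -> gen_span S m' -> gen_span S (m + m').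
Proof. by move=> h h'; rewrite -[m]scale1r; apply: spanZD. Qed.
Lemma spanZ a m : gen_span S m -> gen_span S (a *: m).
Proof. by move=> h; rewrite -[_ *: _]addr0; apply: spanZD => //; apply: span0. Qed.
Lemma spanN m : gen_span S m -> gen_span S (- m).
Proof. by move=> h; rewrite -scaleN1r; apply: spanZ. Qed.
Lemma spanB m m' : gen_span S m -> gen_span S m' -> gen_span S (m - m').
Proof. by move=> h h'; apply: spanD => //; apply: spanN. Qed.
Lemma span_sum n (c : 'I_n -> R) (v : 'I_n -> M) :
  (forall k, gen_span S (v k)) -> gen_span S (\sum_k c k *: v k).
Proof.
move=> H; apply: (big_ind (gen_span S)); [exact: span0 | exact: spanD |].
by move=> k _; apply: spanZ.
Qed.
End Basics.

Section Sub.
Variables (R : comPzRingType) (M : lmodType R) (N : M -> Prop).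
Definition subm := N 0 /\ forall a x y, N x -> N y -> N (a *: x + y).
Hypothesis sN : subm.
Lemma N0 : N 0. Proof. by case: sN. Qed.
Lemma NZD a x y : N x -> N y -> N (a *: x + y). Proof. by case: sN => _; apply. Qed.
Lemma ND x y : N x -> N y -> N (x + y). Proof. by move=> *; rewrite -[x]scale1r; apply: NZD. Qed.
Lemma NZ a x : N x -> N (a *: x). Proof. by move=> *; rewrite -[_ *: _]addr0; apply: NZD => //; apply: N0. Qed.
Lemma NN x : N x -> N (- x). Proof. by move=> *; rewrite -scaleN1r; apply: NZ. Qed.
Lemma NB x y : N x -> N y -> N (x - y). Proof. by move=> *; apply: ND => //; apply: NN. Qed.
Lemma Nsum n (c : 'I_n -> R) (v : 'I_n -> M) : (forall k, N (v k)) -> N (\sum_k c k *: v k).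
Proof.
move=> H; apply: (big_ind N); [exact: N0 | exact: ND |].
by move=> k _; apply: NZ.
Qed.

Definition linN (f : M -> R) := forall a x y, N x -> N y -> f (a *: x + y) = a * f x + f y.
Variable f : M -> R.
Hypothesis lf : linN f.
Lemma f0 : f 0 = 0.
Proof.
have := lf 1 N0 N0; rewrite scale1r addr0 mul1r => h.
by apply: (@addrI _ (f 0)); rewrite addr0 -h.
Qed.
Lemma fD x y : N x -> N y -> f (x + y) = f x + f y.
Proof. by move=> hx hy; rewrite -[x]scale1r lf // mul1r scale1r. Qed.
Lemma fZ a x : N x -> f (a *: x) = a * f x.
Proof. by move=> hx; have := lf a hx N0; rewrite addr0 => ->; rewrite f0 addr0. Qed.
Lemma fN x : N x -> f (- x) = - f x.
Proof. by move=> hx; rewrite -scaleN1r fZ // mulN1r. Qed.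
Lemma fB x y : N x -> N y -> f (x - y) = f x - f y.
Proof. by move=> hx hy; rewrite fD ?fN //; apply: NN. Qed.
Lemma fsum n (c : 'I_n -> R) (v : 'I_n -> M) : (forall k, N (v k)) ->
  f (\sum_k c k *: v k) = \sum_k c k * f (v k).
Proof.
elim: n c v => [|n IH] c v H; first by rewrite !big_ord0 f0.
rewrite !big_ord_recl fD ?IH ?fZ //; first by apply: NZ.
by apply: Nsum.
Qed.
End Sub.
Section PS.
Variables (R : comPzRingType) (M : lmodType R) (p : R -> Prop) (N : M -> Prop)
  (E : (M -> R) -> Prop) (S : M -> Prop).
Hypotheses (pp : prime_ideal p) (sN : subm N) (Elin : forall f, E f -> linN N f).

Let npM := npM pp.
Let np1 := np1 pp.
Let npprod := npprod pp.
Let npprodc := npprodc pp.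
Let N0 := N0 sN.
Let ND := ND sN.
Let NZ := NZ sN.
Let NB := NB sN.
Let NZD := NZD sN.
Let Nsum := Nsum sN.

Definition Pn n := exists (s : 'I_n -> M) (e : 'I_n -> M -> R),
  (forall k, N (s k) /\ gen_span S (s k)) /\ (forall j, E (e j)) /\
  ~ p (\det (\matrix_(j, k) e j (s k))).

Lemma adj_solve n (A : 'M[R]_n) (c : 'I_n -> R) :
  (forall j, \sum_k A j k * c k = 0) -> forall k, \det A * c k = 0.
Proof.
move=> H k.
pose v : 'cV[R]_n := \col_k c k.
have Av : A *m v = 0 by apply/matrixP => j z; rewrite !mxE -[RHS](H j); apply: eq_bigr => l _; rewrite mxE.
have := congr1 (fun X => (\adj A *m X) k 0) Av.
by rewrite mulmxA mul_adj_mx mul_scalar_mx mulmx0 !mxE.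
Qed.

Definition Fs n (s : 'I_n -> M) (x : M * R) :=
  lfrac p N x /\ exists w (c : 'I_n -> R), ~ p w /\ w *: x.1 = \sum_k c k *: s k.

Lemma Fs_lsubmod n (s : 'I_n -> M) : (forall k, N (s k)) -> lsubmod p N (Fs s).
Proof.
move=> Ns; split; first by move=> x [].
split.
  move=> x y [[Nx1 nx2] [w [c [nw Hw]]]] [Ny1 ny2] [u [nu Hu]].
  split => //; exists (w * u * x.2), (fun k => u * y.2 * c k); split.
    by apply: npM => //; apply: npM.
  move: Hu; rewrite scalerBr => /eqP; rewrite subr_eq0 => /eqP Hu.
  rewrite -!scalerA -Hu !scalerA.
  have -> : w * u * y.2 = (u * y.2) * w by ring.
  rewrite -scalerA Hw scaler_sumr.
  by apply: eq_bigr => k _; rewrite scalerA.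
split.
  split; first by split; [apply: N0 | apply: np1].
  exists 1, (fun _ => 0); split; first exact: np1.
  by rewrite scaler0 big1 // => k _; rewrite scale0r.
split.
  move=> x y [[Nx1 nx2] [w [c [nw Hw]]]] [[Ny1 ny2] [w' [c' [nw' Hw']]]].
  split; first split => /=.
  - by apply: ND; apply: NZ.
  - exact: npM.
  exists (w * w'), (fun k => w' * y.2 * c k + w * x.2 * c' k); split; first exact: npM.
  rewrite /= scalerDr !scalerA.
  have -> : w * w' * y.2 = (w' * y.2) * w by ring.
  have -> : w * w' * x.2 = (w * x.2) * w' by ring.
  rewrite -!scalerA Hw Hw' !scaler_sumr -big_split /=.
  by apply: eq_bigr => k _; rewrite !scalerA -scalerDl.
move=> a x na [[Nx1 nx2] [w [c [nw Hw]]]]; split; first split => /=.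
- exact: NZ.
- exact: npM.
exists w, (fun k => a.1 * c k); split => //=.
by rewrite scalerA mulrC -scalerA Hw scaler_sumr; apply: eq_bigr => k _; rewrite scalerA.
Qed.

Definition Gs n (e : 'I_n -> M -> R) (x : M * R) :=
  lfrac p N x /\ forall j, exists v, ~ p v /\ v * e j x.1 = 0.

Lemma Gs_lsubmod n (e : 'I_n -> M -> R) : (forall j, E (e j)) -> lsubmod p N (Gs e).
Proof.
move=> He; split; first by move=> x [].
split.
  move=> x y [[Nx1 nx2] Hx] [Ny1 ny2] [u [nu Hu]]; split => // j.
  have [v [nv Hv]] := Hx j.
  have lj := Elin (He j).
  have := congr1 (e j) Hu.
  rewrite (f0 sN lj) (fZ sN lj); last by apply: NB; apply: NZ.
  rewrite (fB sN lj) ?(fZ sN lj) //; try by apply: NZ.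
  move=> H; exists (v * u * x.2); split; first by apply: npM => //; apply: npM.
  have -> : v * u * x.2 * e j y.1 =
     u * y.2 * (v * e j x.1) - v * (u * (y.2 * e j x.1 - x.2 * e j y.1)) by ring.
  by rewrite Hv H !mulr0 subr0.
split.
  split; first by split; [apply: N0 | apply: np1].
  by move=> j; exists 1; split; [apply: np1 | rewrite (f0 sN (Elin (He j))) mulr0].
split.
  move=> x y [[Nx1 nx2] Hx] [[Ny1 ny2] Hy]; split.
    by split => /=; [apply: ND; apply: NZ | apply: npM].
  move=> j; have [v [nv Hv]] := Hx j; have [v' [nv' Hv']] := Hy j.
  have lj := Elin (He j).
  exists (v * v'); split; first exact: npM.
  rewrite /= (fD lj) ?(fZ sN lj) //; try by apply: NZ.
  have -> : v * v' * (y.2 * e j x.1 + x.2 * e j y.1) =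
    v' * y.2 * (v * e j x.1) + v * x.2 * (v' * e j y.1) by ring.
  by rewrite Hv Hv' !mulr0 addr0.
move=> a x na [[Nx1 nx2] Hx]; split.
  by split => /=; [apply: NZ | apply: npM].
move=> j; have [v [nv Hv]] := Hx j; have lj := Elin (He j).
exists v; split => //=; rewrite (fZ sN lj) //.
by rewrite mulrCA Hv mulr0.
Qed.
End PS.
Lemma mychoice (A B : Type) (P : A -> B -> Prop) :
  (forall x, exists y, P x y) -> exists f : A -> B, forall x, P x (f x).
Proof.
move=> H; exists (fun x => proj1_sig (constructive_indefinite_description _ (H x))).
by move=> x; exact: proj2_sig (constructive_indefinite_description _ (H x)).
Qed.

Lemma prodD1c (R : comPzRingType) n (t : R) (k : 'I_n) :
  \prod_(j < n) t = t * \prod_(j < n | j != k) t.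
Proof. by rewrite (bigD1 k). Qed.

Section PS2.
Variables (R : comPzRingType) (M : lmodType R) (p : R -> Prop) (N : M -> Prop)
  (E : (M -> R) -> Prop) (S : M -> Prop).
Hypotheses (pp : prime_ideal p) (sN : subm N) (Elin : forall f, E f -> linN N f).
Hypothesis Eclos : forall n (a : 'I_n -> R) (e : 'I_n -> M -> R), (forall l, E (e l)) ->
  exists f, E f /\ forall x, N x -> f x = \sum_l a l * e l x.
Let npM := npM pp.
Let np1 := np1 pp.
Let npprod := npprod pp.
Let npprodc := npprodc pp.
Let N0 := N0 sN.
Let ND := ND sN.
Let NZ := NZ sN.
Let NB := NB sN.
Let Nsum := Nsum sN.

Lemma PtoS n : Pn p N E S n -> has_summand p N E S n.
Proof.
move=> [s [e [Hs [He HD]]]].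
have Ns k : N (s k) by case: (Hs k).
have Ss k : gen_span S (s k) by case: (Hs k).
set A := \matrix_(j, k) e j (s k).
set D := \det A.
have [f Hf] : exists f : 'I_n -> M -> R, forall k,
    E (f k) /\ forall x, N x -> f k x = \sum_l \adj A k l * e l x.
  exact: (mychoice (fun k => Eclos (fun l => \adj A k l) He)).
pose b k := (s k, 1) : M * R.
have lcb1 c : (lcomb c b).1 = \sum_k ((\prod_(j | j != k) (c j).2) * (c k).1) *: s k.
  rewrite lcomb1; apply: eq_bigr => k _; congr (_ *: _); congr (_ * _).
  by apply: eq_bigr => j _; rewrite mulr1.
have lcb2 c : (lcomb c b).2 = \prod_k (c k).2.
  by rewrite lcomb2; apply: eq_bigr => k _; rewrite mulr1.
have FL c : (forall k, ~ p (c k).2) -> Fs p N s (lcomb c b).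
  move=> nc; split; first split.
  - by rewrite lcb1; apply: Nsum.
  - by rewrite lcb2; apply: npprod.
  exists 1, (fun k => (\prod_(j | j != k) (c j).2) * (c k).1); split; first exact: np1.
  by rewrite scale1r lcb1.
have eA j (c : 'I_n -> R) : e j (\sum_k c k *: s k) = \sum_k A j k * c k.
  rewrite (fsum sN (Elin (He j))) //; apply: eq_bigr => k _.
  by rewrite mxE mulrC.
have proj x : lfrac p N x -> exists g, Gs p N e g /\
    feq p x (fadd (lcomb (fun k => (f k x.1, D * x.2)) b) g).
  move=> [Nx1 nx2].
  set a := fun k => f k x.1.
  exists (D *: x.1 - \sum_k a k *: s k, D * x.2); split.
    split; first by split => /=; [apply: NB; [apply: NZ | apply: Nsum] | apply: npM].
    move=> j; exists 1; split; first exact: np1.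
    have lj := Elin (He j).
    rewrite mul1r /= (fB sN lj) ?(fZ sN lj) ?eA //; try by [apply: NZ | apply: Nsum].
    apply/eqP; rewrite subr_eq0; apply/eqP.
    have -> : \sum_k A j k * a k = \sum_k A j k * \sum_l \adj A k l * e l x.1.
      by apply: eq_bigr => k _; rewrite /a (proj2 (Hf k)).
    under eq_bigr do rewrite big_distrr /=.
    rewrite exchange_big /=.
    have -> : \sum_l \sum_k A j k * (\adj A k l * e l x.1) =
              \sum_l (A *m \adj A) j l * e l x.1.
      apply: eq_bigr => l _; rewrite mxE big_distrl /=.
      by apply: eq_bigr => k _; rewrite mulrA.
    rewrite mul_mx_adj (bigD1 j) //= big1 ?addr0; first by rewrite mxE eqxx mulr1n.
    by move=> l /negbTE nl; rewrite mxE eq_sym nl mulr0n mul0r.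
  exists 1; split; first exact: np1.
  rewrite scale1r /= lcb1 lcb2.
  set T := \prod_k (D * x.2).
  have HT (k : 'I_n) : T = D * x.2 * \prod_(j | j != k) (D * x.2) by exact: (prodD1c (D * x.2) k).
  have -> : (D * x.2) *: \sum_k (\prod_(j | j != k) (D * x.2) * a k) *: s k =
            T *: \sum_k a k *: s k.
    rewrite !scaler_sumr; apply: eq_bigr => k _; rewrite !scalerA (HT k).
    by congr (_ *: _); ring.
  rewrite scalerBr addrCA subrr addr0 !scalerA.
  have -> : x.2 * (T * D) = T * (D * x.2) by ring.
  by rewrite subrr.
exists (Fs p N s); split; last first.
  move=> x [[Nx1 nx2] [w [c [nw Hw]]]]; split => //.
  exists (\sum_k c k *: s k), (w * x.2); split.
  - by apply: span_sum.
  - exact: npM.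
  - exists 1; split; first exact: np1.
    by rewrite /= -Hw scale1r scalerA mulrC subrr.
exists (Gs p N e), b; split.
- exact: (Fs_lsubmod pp sN Ns).
- exact: (Gs_lsubmod pp sN Elin He).
- move=> x Hx; have [g [Gg Hg]] := proj x Hx.
  exists (lcomb (fun k => (f k x.1, D * x.2)) b), g; split => //.
  by apply: FL => k /=; apply: npM => //; case: Hx.
- move=> x [[Nx1 nx2] [w [c [nw Hw]]]] [_ Hg].
  have [vf Hvf] := mychoice Hg.
  pose V := \prod_j vf j.
  have nV : ~ p V by apply: npprod => j; case: (Hvf j).
  have HV j : V * e j x.1 = 0.
    rewrite /V (bigD1 j) //= mulrAC.
    by have [_ ->] := Hvf j; rewrite mul0r.
  have Hc k : D * (V * c k) = 0.
    apply: (@adj_solve _ _ A (fun k => V * c k)) => j.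
    have := congr1 (e j) Hw; rewrite eA (fZ sN (Elin (He j))) // => H.
    under eq_bigr do rewrite mulrCA.
    by rewrite -big_distrr /= -H mulrCA HV mulr0.
  exists (D * V * w); split; first by apply: npM => //; apply: npM.
  rewrite /= scale1r scaler0 subr0 -scalerA Hw scaler_sumr big1 // => k _.
  by rewrite scalerA -mulrA Hc scale0r.
split.
- move=> k; split; first by split; [apply: Ns | apply: np1].
  exists 1, (fun l => (l == k)%:R); split; first exact: np1.
  rewrite scale1r (bigD1 k) //= eqxx scale1r big1 ?addr0 // => l /negbTE ->.
  by rewrite scale0r.
- move=> x [[Nx1 nx2] [w [a [nw Hw]]]].
  exists (fun k => (a k, w * x.2)); split; first by move=> k; apply: npM.
  exists w; split => //.
  rewrite lcb1 lcb2 /=.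
  set T := \prod_k (w * x.2).
  have HT (k : 'I_n) : T = w * x.2 * \prod_(j | j != k) (w * x.2) by exact: (prodD1c (w * x.2) k).
  rewrite scalerBr !scalerA [w * T]mulrC -[(T * w) *: x.1]scalerA Hw !scaler_sumr -sumrB big1 // => k _.
  by rewrite !scalerA (HT k) mulrA subrr.
- move=> c nc [u [nu Hu]] k.
  move: Hu; rewrite /= scale1r scaler0 subr0 lcb1 scaler_sumr => Hu.
  have Hc : D * (u * (\prod_(j | j != k) (c j).2 * (c k).1)) = 0.
    apply: (@adj_solve _ _ A (fun k => u * (\prod_(j | j != k) (c j).2 * (c k).1))) => j.
    have := congr1 (e j) Hu; rewrite (f0 sN (Elin (He j))).
    under eq_bigr do rewrite scalerA.
    by rewrite eA.
  exists (D * u * \prod_(j | j != k) (c j).2); split.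
    by apply: npM; [apply: npM | apply: npprodc].
  by rewrite /= mul1r mulr0 subr0 -!mulrA.
- exists f, (fun _ => D); split; first by move=> k; split; [case: (Hf k) |].
  exact: proj.
Qed.
End PS2.
Ltac vnorm := rewrite ?(scalerDr, scalerBr, scalerN, scalerA, opprD, opprK, scaleNr);
  rewrite -?scaleNr ?addrA.
Lemma vid1 (R : comPzRingType) (M : lmodType R) (rho L t : R) (be la ga : M) :
  rho *: ((rho * L) *: (rho *: be) + (rho * t) *: (- rho *: la)) - ((rho * t) * (rho * L)) *: ga
  = (rho * rho) *: ((L * rho) *: be - t *: (rho *: la + L *: ga)).
Proof. vnorm. by congr (_ *: _ + _ *: _ + _ *: _); ring. Qed.
Lemma vid2 (R : comPzRingType) (M : lmodType R) (rho L t u1 u2 : R) (be la ga : M) :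
  (u2 * u1 * rho) *: (L *: be - t *: la) =
  u2 *: (u1 *: ((L * rho) *: be - t *: (rho *: la + L *: ga))) + (u1 * t * L) *: (u2 *: ga).
Proof.
vnorm. rewrite -[RHS]addrA -scalerDl.
have -> : - (u2 * u1 * t * L) + u1 * t * L * u2 = 0 by ring.
by rewrite scale0r addr0; congr (_ *: _ + _ *: _); ring.
Qed.

Lemma scalerC2 (R : comPzRingType) (M : lmodType R) (a c : R) (v : M) :
  a *: (c *: v) = c *: (a *: v).
Proof. by rewrite !scalerA mulrC. Qed.

Section SP.
Variables (R : comPzRingType) (M : lmodType R) (p : R -> Prop) (N : M -> Prop)
  (E : (M -> R) -> Prop) (S : M -> Prop).
Hypotheses (pp : prime_ideal p) (sN : subm N) (Elin : forall f, E f -> linN N f).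
Let npM := npM pp.
Let np1 := np1 pp.
Let npprod := npprod pp.
Let npprodc := npprodc pp.
Let NZ := NZ sN.

Lemma F_lcomb (F : M * R -> Prop) n (c : 'I_n -> R * R) (b : 'I_n -> M * R) :
  lsubmod p N F -> (forall k, F (b k)) -> (forall k, ~ p (c k).2) -> F (lcomb c b).
Proof.
move=> [_ [_ [F0 [FD FZ]]]] Fb nc; apply: (big_ind F) => // k _.
exact: FZ.
Qed.

Lemma unifP n (Q : 'I_n -> R -> Prop) :
  (forall k w a, Q k w -> Q k (a * w)) -> (forall k, exists w, ~ p w /\ Q k w) ->
  exists w, ~ p w /\ forall k, Q k w.
Proof.
move=> HQ /mychoice [wf Hw]; exists (\prod_k wf k); split.
  by apply: npprod => k; case: (Hw k).
move=> k; rewrite (bigD1 k) //= mulrC; apply: HQ.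
by case: (Hw k).
Qed.

Lemma StoP n : has_summand p N E S n -> Pn p N E S n.
Proof.
move=> [F [[G [b [lF lG dec FG0 [bF spF ind [e [u [Heu proj]]]]]]] FS]].
have Fl x : F x -> lfrac p N x by case: lF => H _; apply: H.
have Fe x y : F x -> lfrac p N y -> feq p x y -> F y by case: lF => _ [H _]; apply: H.
have FD x y : F x -> F y -> F (fadd x y) by case: lF => _ [_ [_ [H _]]]; apply: H.
have FZ a x : ~ p a.2 -> F x -> F (fscale a x) by case: lF => _ [_ [_ [_ H]]]; apply: H.
have Gl x : G x -> lfrac p N x by case: lG => H _; apply: H.
have claim l k : exists w, ~ p w /\
    w * (e k (b l).1 - (k == l)%:R * (u k * (b k).2)) = 0.
  have [Nb nb] := Fl _ (bF l).
  set c := fun k => (e k (b l).1, u k * (b l).2).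
  have [g [Gg [u1 [nu1 Hu1]]]] := proj (b l) (Fl _ (bF l)).
  rewrite -/c /= in Hu1.
  set L := lcomb c b in Hu1.
  have nc k' : ~ p (c k').2 by apply: npM => //; case: (Heu k').
  have FLc : F L by apply: F_lcomb.
  have [Ng1 ng2] := Gl _ Gg.
  have Fg : F g.
    set w := fadd (fscale (g.2, g.2) (b l)) (fscale (- g.2, g.2) L).
    have Fw : F w by apply: FD; apply: FZ.
    apply: (Fe w g Fw) => //; exists u1; split => //.
    by rewrite /w /= vid1 scalerC2 Hu1 scaler0.
  have [u2 [nu2 Hu2]] := FG0 g Fg Gg.
  move: Hu2; rewrite /= scale1r scaler0 subr0 => Hu2.
  have HbL : (u2 * u1 * g.2) *: (L.2 *: (b l).1 - (b l).2 *: L.1) = 0.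
    by rewrite (@vid2 _ _ _ _ _ _ _ _ _ g.1) Hu1 Hu2 !scaler0 addr0.
  pose c2 := fun k => ((b k).2 * (L.2 * (k == l)%:R - (b l).2 *
       ((\prod_(j | j != k) ((c j).2 * (b j).2)) * (c k).1)), 1 : R).
  have Hc2 : feq p (lcomb c2 b) (fzero M).
    exists (u2 * u1 * g.2); split; first by apply: npM => //; apply: npM.
    rewrite /= scale1r scaler0 subr0 lcomb1.
    set T := \prod_j (b j).2.
    have -> : \sum_k (\prod_(j | j != k) ((c2 j).2 * (b j).2) * (c2 k).1) *: (b k).1 =
              T *: (L.2 *: (b l).1 - (b l).2 *: L.1).
      rewrite (eq_bigr (fun k => (T * L.2 * (k == l)%:R) *: (b k).1 -
         (T * (b l).2) *: (((\prod_(j | j != k) ((c j).2 * (b j).2)) * (c k).1) *: (b k).1))).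
        rewrite sumrB (bigD1 l) //= big1 ?addr0; last first.
          by move=> k0 /negbTE ->; rewrite mulr0 scale0r.
        rewrite eqxx mulr1 -scaler_sumr /L lcomb1 scalerBr !scalerA.
        by rewrite [T * (b l).2]mulrC.
      move=> k0 _; rewrite scalerA -scalerBl; congr (_ *: _).
      have -> : \prod_(j | j != k0) ((c2 j).2 * (b j).2) = \prod_(j | j != k0) (b j).2.
        by apply: eq_bigr => j _; rewrite mul1r.
      by rewrite /T [\prod_(j < n) (b j).2](bigD1 k0) //= /c2 /=; ring.
    by rewrite scalerC2 HbL scaler0.
  have [w [nw Hw]] := ind c2 (fun _ => np1) Hc2 k.
  exists (w * (b k).2 * \prod_(j | j != k) ((c j).2 * (b j).2) * (b l).2); split.
    have nbk : ~ p (b k).2 by case: (Fl _ (bF k)).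
    have nP : ~ p (\prod_(j | j != k) ((c j).2 * (b j).2)).
      by apply: npprodc => j; apply: npM => //; case: (Fl _ (bF j)).
    by apply: npM => //; apply: npM => //; apply: npM.
  move: Hw; rewrite /= mul1r mulr0 subr0 /L lcomb2 (bigD1 k) //= => Hw.
  by rewrite -[RHS]oppr0 -Hw; ring.
have [W [nW HW]] : exists W, ~ p W /\ forall l k,
    W * (e k (b l).1 - (k == l)%:R * (u k * (b k).2)) = 0.
  apply: unifP => [l w a H k|l]; first by rewrite -mulrA H mulr0.
  apply: unifP => [k w a H|k]; first by rewrite -mulrA H mulr0.
  exact: claim.
have [z Hz] : exists z : 'I_n -> (M * R) * R, forall l,
    [/\ gen_span S (z l).1.1, ~ p (z l).1.2, ~ p (z l).2 &
        (z l).2 *: ((z l).1.2 *: (b l).1 - (b l).2 *: (z l).1.1) = 0].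
  apply: (@mychoice _ _ (fun l (z : (M * R) * R) =>
    [/\ gen_span S z.1.1, ~ p z.1.2, ~ p z.2 &
        z.2 *: (z.1.2 *: (b l).1 - (b l).2 *: z.1.1) = 0])) => l.
  have [_ [m [t [Sm nt [v [nv Hv]]]]]] := FS _ (bF l).
  by exists ((m, t), v).
pose s l := ((z l).2 * (z l).1.2) *: (b l).1.
have Nb l : N (b l).1 by case: (Fl _ (bF l)).
exists s, e; split; [|split].
- move=> l; have [Sm nt nv Hv] := Hz l; split; first exact: NZ.
  have -> : s l = ((z l).2 * (b l).2) *: (z l).1.1.
    move: Hv; rewrite scalerBr => /eqP; rewrite subr_eq0 => /eqP.
    by rewrite !scalerA.
  exact: spanZ.
- by move=> j; case: (Heu j).
set A := \matrix_(j, k) e j (s k).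
pose d := \row_j ((z j).2 * (z j).1.2 * (u j * (b j).2)).
have HA : W *: A = W *: diag_mx d.
  apply/matrixP => j k; rewrite !mxE /s (fZ sN (Elin (Heu j).1)) //.
  have H := HW k j.
  case: (eqVneq j k) => [ejk|njk].
    subst k; rewrite mulr1n; rewrite eqxx mul1r in H.
    move/eqP: H; rewrite mulrBr subr_eq0 => /eqP H.
    by rewrite mulrCA H; ring.
  rewrite mulr0n mulr0.
  move: H; rewrite (negbTE njk) mul0r subr0 => H.
  by rewrite mulrCA H mulr0.
have := congr1 determinant HA; rewrite !detZ det_diag => Hdet pA.
have nd : ~ p (W ^+ n * \prod_i d 0 i).
  apply: npM; first exact: npX.
  apply: npprod => j; rewrite mxE.
  have [_ nt nv _] := Hz j.
  by apply: npM; [apply: npM | apply: npM => //; [case: (Heu j) | case: (Fl _ (bF j))]].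
by apply: nd; rewrite -Hdet; apply: pM => //; apply: pid_of.
Qed.
End SP.
Section Lin.
Variables (R : comPzRingType) (U V : lmodType R) (h : U -> V).
Hypothesis hL : forall a x y, h (a *: x + y) = a *: h x + h y.
Lemma h0 : h 0 = 0.
Proof.
have := hL 1 0 0; rewrite scale1r addr0 scale1r => H.
by apply: (@addrI _ (h 0)); rewrite addr0 -H.
Qed.
Lemma hD x y : h (x + y) = h x + h y.
Proof. by rewrite -[x]scale1r hL !scale1r. Qed.
Lemma hZ a x : h (a *: x) = a *: h x.
Proof. by have := hL a x 0; rewrite addr0 h0 addr0. Qed.
Lemma hN x : h (- x) = - h x.
Proof. by rewrite -scaleN1r hZ scaleN1r. Qed.
Lemma hB x y : h (x - y) = h x - h y.
Proof. by rewrite hD hN. Qed.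
Lemma hsum n (c : 'I_n -> R) (v : 'I_n -> U) : h (\sum_k c k *: v k) = \sum_k c k *: h (v k).
Proof.
elim: n c v => [|n IH] c v; first by rewrite !big_ord0 h0.
by rewrite !big_ord_recl hD hZ IH.
Qed.
End Lin.

Lemma exmax (B : nat -> Prop) g : B 0%N -> (forall d, B d -> (d <= g)%N) ->
  exists d, B d /\ forall n, B n -> (n <= d)%N.
Proof.
move=> B0 Bg; apply: NNPP => H.
have K m : exists d, B d /\ (m <= d)%N.
  elim: m => [|m [d [Bd md]]]; first by exists 0%N.
  apply: NNPP => H2; apply: H; exists d; split => // n Bn.
  apply: NNPP => nd; apply: H2; exists n; split => //.
  by move/negP: nd; rewrite -ltnNge => dn; apply: leq_ltn_trans md dn.
have [d [Bd gd]] := K g.+1.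
by have := Bg d Bd; rewrite leqNgt => /negP; apply.
Qed.
Section Main.
Variables (R : comPzRingType) (M : lmodType R) (E : (M -> R) -> Prop) (S : M -> Prop)
  (i : nat) (phi : M -> 'rV[R]_i) (iota : 'rV[R]_i -> M) (p : R -> Prop).
Hypotheses (hE : hom_submod E)
  (phiL : forall a x y, phi (a *: x + y) = a *: phi x + phi y)
  (iotaL : forall a v w, iota (a *: v + w) = a *: iota v + iota w)
  (phiiota : forall v, phi (iota v) = v)
  (iotaS : forall v, gen_span S (iota v))
  (Ephi : forall j : 'I_i, E (fun m => phi m ord0 j))
  (pp : prime_ideal p).

Let M' := fun m : M => phi m = 0.
Let S' := fun m' : M => exists s, S s /\ m' = s - iota (phi s).
Let E' := fun g : M -> R => exists f, E f /\ forall x, M' x -> g x = f x.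
Let T := fun _ : M => True.
Let pi' := fun m : M => m - iota (phi m).

Lemma sT : subm T. Proof. by []. Qed.
Lemma sM' : subm M'.
Proof. split; first exact: h0. by move=> a x y hx hy; rewrite /M' phiL hx hy scaler0 addr0. Qed.

Lemma EL : forall f, E f -> linN T f.
Proof. by move=> f Ef a x y _ _; case: hE => H _; apply: H. Qed.

Lemma EL' : forall g, E' g -> linN M' g.
Proof.
move=> g [f [Ef Hg]] a x y hx hy.
rewrite !Hg //; last by apply: (NZD sM').
exact: EL.
Qed.

Lemma Ecl : forall n (a : 'I_n -> R) (e : 'I_n -> M -> R), (forall l, E (e l)) ->
  exists f, E f /\ forall x, T x -> f x = \sum_l a l * e l x.
Proof.
case: hE => _ [E0 [EA EZ]].
elim=> [|n IH] a e He.
  by exists (fun _ => 0); split => // x _; rewrite big_ord0.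
have [f [Ef Hf]] := IH (fun l => a (lift ord0 l)) (fun l => e (lift ord0 l)) (fun l => He _).
exists (fun x => a ord0 * e ord0 x + f x); split.
  by apply: (EA (fun x => a ord0 * e ord0 x) f) => //; apply: EZ.
by move=> x _; rewrite big_ord_recl Hf.
Qed.

Lemma Ecl' : forall n (a : 'I_n -> R) (e : 'I_n -> M -> R), (forall l, E' (e l)) ->
  exists f, E' f /\ forall x, M' x -> f x = \sum_l a l * e l x.
Proof.
move=> n a e /mychoice [g Hg].
have [F [EF HF]] := Ecl a (fun l => proj1 (Hg l)).
exists F; split; first by exists F.
move=> x hx; rewrite HF //; apply: eq_bigr => l _.
by have [_ ->] := Hg l.
Qed.

Lemma spanS'S m : gen_span S' m -> gen_span S m.
Proof.
move=> [n [v [c [Hv ->]]]]; apply: span_sum => k.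
have [w [Sw ->]] := Hv k.
by apply: spanB; [apply: span_in | apply: iotaS].
Qed.

Lemma pi'L a x y : pi' (a *: x + y) = a *: pi' x + pi' y.
Proof. by rewrite /pi' phiL iotaL; rewrite scalerBr; rewrite opprD addrACA. Qed.

Lemma spanSS' m : gen_span S m -> gen_span S' (pi' m).
Proof.
move=> [n [v [c [Hv ->]]]]; rewrite (hsum pi'L); apply: span_sum => k.
by apply: span_in; exists (v k).
Qed.

Lemma phipi m : phi (pi' m) = 0.
Proof. by rewrite /pi' (hB phiL) phiiota subrr. Qed.


Lemma PC d : Pn p M' E' S' d -> Pn p T E S (d + i).
Proof.
move=> [s' [e' [Hs' [He' Hdet]]]].
have [f Hf] : exists f : 'I_d -> M -> R, forall a,
    E (f a) /\ forall x, M' x -> e' a x = f a x := mychoice He'.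
pose s k := match split k with inl b => s' b | inr m => iota (delta_mx 0 m) end.
pose e k := match split k with inl a => f a | inr l => fun x => phi x ord0 l end.
exists s, e; split; [|split].
- move=> k; split => //; rewrite /s; case: (split k) => [b|m].
    by apply: spanS'S; case: (Hs' b).
  exact: iotaS.
- by move=> k; rewrite /e; case: (split k) => [a|l]; [case: (Hf a) | apply: Ephi].
have -> : \matrix_(j, k) e j (s k) = block_mx (\matrix_(a, b) e' a (s' b))
     (\matrix_(a, m) f a (iota (delta_mx 0 m))) 0 1%:M.
  apply/matrixP => j k; rewrite mxE -[j]splitK -[k]splitK /e /s !unsplitK.
  case: (split j) => [a|l]; case: (split k) => [b|m] /=.
  + rewrite block_mxEul mxE; have [_ <-] := Hf a => //.
    by case: (Hs' b).
  + by rewrite block_mxEur mxE.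
  + by rewrite block_mxEdl mxE; have [-> _] := Hs' b; rewrite mxE.
  + by rewrite block_mxEdr phiiota !mxE eqxx /= eq_sym.
by rewrite det_ublock det1 mulr1.
Qed.

Lemma PD n : Pn p T E S (n + i) -> Pn p M' E' S' n.
Proof.
move=> [s [e [Hs [He Hdet]]]].
pose A' := \matrix_(j, k) e j (pi' (s k)).
pose x := fun (l : 'I_i) (j : 'I_(n + i)) => e j (iota (delta_mx 0 l)).
pose y := fun (l : 'I_i) (k : 'I_(n + i)) => phi (s k) ord0 l.
have HA : \matrix_(j, k) e j (s k) = \matrix_(a, b) (A' a b + \sum_(l < i) x l a * y l b).
  apply/matrixP => j k; rewrite !mxE.
  have lj := EL (He j).
  have es : s k = pi' (s k) + \sum_l (phi (s k) ord0 l) *: iota (delta_mx 0 l).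
    by rewrite -(hsum iotaL) -row_sum_delta /pi' subrK.
  rewrite {1}es (fD lj) // (fsum sT lj) //.
  by congr (_ + _); apply: eq_bigr => l _; rewrite mulrC.
have Q := Qfull Hdet.
rewrite HA in Q.
have [r [c Hrc]] := QstepN (pid_of pp) Q.
exists (fun b => pi' (s (c b))), (fun a => e (r a)); split; [|split].
- move=> b; split; first exact: phipi.
  by apply: spanSS'; case: (Hs (c b)).
- by move=> a; exists (e (r a)); split.
have -> : \matrix_(j, k) e (r j) (pi' (s (c k))) = minor r c A'.
  by apply/matrixP => a b; rewrite !mxE.
exact: Hrc.
Qed.

Lemma PE g (gen : 'I_g -> M) : (forall m, exists c : 'I_g -> R, m = \sum_k c k *: gen k) ->
  forall n, Pn p T E S n -> (n <= g)%N.
Proof.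
move=> Hg n HP; case: (leqP n g) => // lt; exfalso.
have en : n = ((n - g.+1).+1 + g)%N by rewrite addSnnS subnK.
move: HP; rewrite en; move: (n - g.+1)%N => k.
move=> [s [e [Hs [He Hdet]]]].
have [cf Hcf] := mychoice (fun k => Hg (s k)).
have HA : \matrix_(j, l) e j (s l) =
    \matrix_(a, b) ((0 : 'M[R]_(k.+1 + g)) a b + \sum_(t < g) e a (gen t) * cf b t).
  apply/matrixP => a b; rewrite !mxE add0r {1}(Hcf b) (fsum sT (EL (He a))) //.
  by apply: eq_bigr => t _; rewrite mulrC.
have Q := Qfull Hdet.
rewrite HA in Q.
have := QstepN (pid_of pp) Q; exact: (Qzero (pid_of pp)).
Qed.

Lemma main_sec g (gen : 'I_g -> M) : (forall m, exists c : 'I_g -> R, m = \sum_k c k *: gen k) ->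
  exists d, delta_is p T E S (d + i) /\ delta_is p M' E' S' d.
Proof.
move=> Hg.
have B0 : Pn p M' E' S' 0.
  exists (fun _ => 0), (fun _ _ => 0); split; first by case.
  split; first by case.
  by rewrite det_mx00; exact: (np1 pp).
have Bb d : Pn p M' E' S' d -> (d <= g)%N.
  move=> h; have := PE Hg (PC h); apply: leq_trans; exact: leq_addr.
have [d [Bd Bmax]] := exmax B0 Bb.
exists d; split; split.
- by apply: (PtoS pp sT EL Ecl); apply: PC.
- move=> n hn; have Pn' := StoP pp sT EL hn.
  case: (leqP n i) => [ni|ni]; first by apply: leq_trans ni (leq_addl _ _).
  have en : n = ((n - i) + i)%N by rewrite subnK // ltnW.
  move: Pn'; rewrite en => Pn'; rewrite leq_add2r.
  by apply: Bmax; apply: PD.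
- exact: (PtoS pp sM' EL' Ecl').
- by move=> n hn; apply: Bmax; apply: (StoP pp sM' EL' hn).
Qed.
End Main.

Unset Implicit Arguments.
Set Strict Implicit.

Theorem lemma4p7 (R : comPzRingType) (M : lmodType R)
  (E : (M -> R) -> Prop) (S : M -> Prop) (i : nat)
  (phi : M -> 'rV[R]_i) (iota : 'rV[R]_i -> M) :
  noetherian R -> fin_gen M -> hom_submod E ->
  (forall a x y, phi (a *: x + y) = a *: phi x + phi y) ->
  (forall a v w, iota (a *: v + w) = a *: iota v + iota w) ->
  (forall v, phi (iota v) = v) ->
  (forall v, gen_span S (iota v)) ->
  (forall j : 'I_i, E (fun m => phi m ord0 j)) ->
  let M' := fun m : M => phi m = 0 in
  let S' := fun m' : M => exists s, S s /\ m' = s - iota (phi s) in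
  let E' := fun g : M -> R => exists f, E f /\ forall x, M' x -> g x = f x in
  forall p : R -> Prop, prime_ideal p ->
    exists d : nat,
      delta_is p (fun _ => True) E S (d + i)%N /\ delta_is p M' E' S' d.
Proof.
move=> _ [g [gen Hgen]] hE phiL iotaL phiiota iotaS Ephi M' S' E' p pp.
exact: (main_sec hE phiL iotaL phiiota iotaS Ephi pp Hgen).
Qed.
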